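(* Consider a market with $M$ consumers $\mathcal{M}=\{1,\dots,M\}$ and $N$ suppliers $\mathcal{N}=\{1,\dots,N\}$, constants $d_0>0$, $\kappa_0>0$ with $Md_0<N\kappa_0$. For each $i\in\mathcal{M}$, $U_i$ is concave, strictly increasing and continuously differentiable on $[d_0,\infty)$ with $U_i(d_0)=0$; for each $i\in\mathcal{N}$, $C_i:\mathbb{R}\to\mathbb{R}$ is convex, strictly increasing and continuously differentiable with $C_i(s)\ge0$ for $s\ge0$ and $C_i(s)=0$ for $s\le0$. Define the game $\mathcal{G}$ whose players are $\mathcal{M}\cup\mathcal{N}$; consumer $i$ chooses $\theta_d^i\ge0$ and supplier $i$ chooses $\theta_s^i\ge 0$. For a profile $(\boldsymbol{\theta}_d,\boldsymbol{\theta}_s)$ with $\sum_i\theta_d^i+\sum_i\theta_s^i>0$, the price is $p(\boldsymbol{\theta}_d,\boldsymbol{\theta}_s)=\frac{\sum_i\theta_d^i+\sum_i\theta_s^i}{N\kappa_0-Md_0}$ and the payoffs are $$\pi_d^i=U_i\!\left(d_0+\frac{\theta_d^i}{p}\right)-p\,d_0-\theta_d^i\ (i\in\mathcal{M}),\qquad \pi_s^i=p\,\kappa_0-\theta_s^i-C_i\!\left(\kappa_0-\frac{\theta_s^i}{p}\right)\ (i\in\mathcal{N}),$$ with $p=p(\boldsymbol{\theta}_d,\boldsymbol{\theta}_s)$. If all parameters are zero, by convention each consumer is allocated $d_0$, each supplier $\kappa_0$, and the price is $0$ (so consumer payoffs are $U_i(d_0)=0$ and supplier payoffs are $-C_i(\kappa_0)$).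 Suppose some supplier is pivotal, i.e. $\frac{(N-1)\kappa_0}{Md_0}<1$. Then $\mathcal{G}$ admits no (pure) Nash equilibrium.
   Context: A Nash equilibrium is a profile $(\tilde{\boldsymbol{\theta}}_d,\tilde{\boldsymbol{\theta}}_s)$ of nonnegative parameters such that no consumer and no supplier can strictly increase its own payoff by unilaterally changing its own parameter to another nonnegative value. The quantity $\frac{(N-1)\kappa_0}{Md_0}$ is the residual supply index of a supplier. *)

(* Defs.v *)
From Stdlib Require Import Reals Lra.
From Coquelicot Require Import Coquelicot.
Open Scope R_scope.

Fixpoint sumR (n : nat) (f : nat -> R) : R :=
  match n with
  | O => 0
  | S k => sumR k f + f k
  end.

Definition upd (th : nat -> R) (i : nat) (t : R) : nat -> R :=
  fun k => if Nat.eqb k i then t else th k.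

Definition concave_on_Ici (f : R -> R) (a : R) : Prop :=
  forall x y t, a <= x -> a <= y -> 0 <= t <= 1 ->
    t * f x + (1 - t) * f y <= f (t * x + (1 - t) * y).

Definition strict_incr_on_Ici (f : R -> R) (a : R) : Prop :=
  forall x y, a <= x -> x < y -> f x < f y.

Definition C1_on_Ici (f : R -> R) (a : R) : Prop :=
  exists f' : R -> R,
    (forall x, a < x -> is_derive f x (f' x)) /\
    filterlim (fun h => (f (a + h) - f a) / h) (at_right 0) (locally (f' a)) /\
    (forall x, a < x -> continuous f' x) /\
    filterlim f' (at_right a) (locally (f' a)).

Definition convex_R (f : R -> R) : Prop :=
  forall x y t, 0 <= t <= 1 ->
    f (t * x + (1 - t) * y) <= t * f x + (1 - t) * f y.

Definition C1_R (f : R -> R) : Prop :=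
  exists f' : R -> R, forall x, is_derive f x (f' x) /\ continuous f' x.

Definition total_bid (M N : nat) (td ts : nat -> R) : R :=
  sumR M td + sumR N ts.

Definition price (M N : nat) (d0 k0 : R) (td ts : nat -> R) : R :=
  total_bid M N td ts / (INR N * k0 - INR M * d0).

(* Consumer i's payoff; when all parameters are zero (total bid not > 0),
   the allocation is d0 and the price 0, so the payoff is U_i(d0). *)
Definition payoff_d (M N : nat) (d0 k0 : R) (U : nat -> R -> R)
    (td ts : nat -> R) (i : nat) : R :=
  if Rlt_dec 0 (total_bid M N td ts) then
    let p := price M N d0 k0 td ts in
    U i (d0 + td i / p) - p * d0 - td i
  else U i d0.

(* Supplier i's payoff; when all parameters are zero, allocation k0 and
   price 0, so the payoff is - C_i(k0). *)
Definition payoff_s (M N : nat) (d0 k0 : R) (C : nat -> R -> R)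
    (td ts : nat -> R) (i : nat) : R :=
  if Rlt_dec 0 (total_bid M N td ts) then
    let p := price M N d0 k0 td ts in
    p * k0 - ts i - C i (k0 - ts i / p)
  else - C i k0.

Definition is_NE (M N : nat) (d0 k0 : R) (U C : nat -> R -> R)
    (td ts : nat -> R) : Prop :=
  (forall i, (i < M)%nat -> 0 <= td i) /\
  (forall i, (i < N)%nat -> 0 <= ts i) /\
  (forall i, (i < M)%nat -> forall t, 0 <= t ->
      payoff_d M N d0 k0 U (upd td i t) ts i <= payoff_d M N d0 k0 U td ts i) /\
  (forall i, (i < N)%nat -> forall t, 0 <= t ->
      payoff_s M N d0 k0 C td (upd ts i t) i <= payoff_s M N d0 k0 C td ts i).

Definition RSI (M N : nat) (d0 k0 : R) : R :=
  (INR N - 1) * k0 / (INR M * d0).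

(* Main.v *)
Require Import Defs.
From Stdlib Require Import Reals.
From Coquelicot Require Import Coquelicot.
From Stdlib Require Import Lra Lia.
Open Scope R_scope.

Lemma sumR_nonneg n f : (forall k, (k < n)%nat -> 0 <= f k) -> 0 <= sumR n f.
Proof.
  induction n; simpl; intros H; [lra|].
  assert (0 <= sumR n f) by (apply IHn; intros; apply H; lia).
  assert (0 <= f n) by (apply H; lia). lra.
Qed.

Lemma sumR_ge n f : (forall k, (k < n)%nat -> 0 <= f k) ->
  forall i, (i < n)%nat -> f i <= sumR n f.
Proof.
  induction n; simpl; intros H i Hi; [lia|].
  destruct (Nat.eq_dec i n) as [->|Hne].
  - assert (0 <= sumR n f) by (apply sumR_nonneg; intros; apply H; lia). lra.
  - assert (f i <= sumR n f) by (apply IHn; [intros; apply H; lia| lia]).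
    assert (0 <= f n) by (apply H; lia). lra.
Qed.

Theorem lemma1 (M N : nat) (d0 k0 : R) (U C : nat -> R -> R)
  (HM : (0 < M)%nat)
  (Hd0 : 0 < d0) (Hk0 : 0 < k0)
  (Hcap : INR M * d0 < INR N * k0)
  (HU_conc : forall i, (i < M)%nat -> concave_on_Ici (U i) d0)
  (HU_incr : forall i, (i < M)%nat -> strict_incr_on_Ici (U i) d0)
  (HU_C1 : forall i, (i < M)%nat -> C1_on_Ici (U i) d0)
  (HU_0 : forall i, (i < M)%nat -> U i d0 = 0)
  (HC_conv : forall i, (i < N)%nat -> convex_R (C i))
  (HC_incr : forall i, (i < N)%nat -> forall x y, 0 <= x -> x < y -> C i x < C i y)
  (HC_C1 : forall i, (i < N)%nat -> C1_R (C i))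
  (HC_nonneg : forall i, (i < N)%nat -> forall s, 0 <= s -> 0 <= C i s)
  (HC_zero : forall i, (i < N)%nat -> forall s, s <= 0 -> C i s = 0)
  (Hpivot : RSI M N d0 k0 < 1) :
  ~ (exists td ts : nat -> R, is_NE M N d0 k0 U C td ts).
Proof.
  intros [td [ts [Htd [Hts [_ Hs]]]]].
  assert (HMr : 0 < INR M) by (apply lt_0_INR; lia).
  assert (HN : (0 < N)%nat).
  { destruct N; [simpl in Hcap; nra | lia]. }
  set (D := INR N * k0 - INR M * d0).
  assert (HD : 0 < D) by (unfold D; lra).
  assert (HDk : D < k0).
  { unfold RSI in Hpivot. apply Rmult_lt_compat_r with (r := INR M * d0) in Hpivot;
      [|nra].
    unfold Rdiv in Hpivot. rewrite Rmult_assoc, Rinv_l in Hpivot by nra.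
    unfold D; lra. }
  set (P0 := payoff_s M N d0 k0 C td ts 0).
  set (a := k0 / D - 1).
  assert (Ha : 0 < a).
  { unfold a. apply Rmult_lt_compat_r with (r := / D) in HDk;
      [|apply Rinv_0_lt_compat; lra].
    rewrite Rinv_r in HDk by lra. unfold Rdiv; lra. }
  assert (HCk : 0 <= C 0%nat k0) by (apply HC_nonneg; auto; lra).
  set (t := (Rabs P0 + C 0%nat k0 + 1) / a).
  assert (Hta : t * a = Rabs P0 + C 0%nat k0 + 1) by (unfold t; field; lra).
  assert (Ht : 0 < t).
  { unfold t. apply Rdiv_lt_0_compat; [|lra]. pose proof (Rabs_pos P0). lra. }
  specialize (Hs 0%nat HN t (Rlt_le _ _ Ht)).
  fold P0 in Hs.
  set (g := upd ts 0 t) in *.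
  assert (Hg0 : g 0%nat = t) by reflexivity.
  assert (Hgnn : forall k, (k < N)%nat -> 0 <= g k).
  { intros k Hk. unfold g, upd. destruct (Nat.eqb k 0); [lra| apply Hts; auto]. }
  clearbody g t P0.
  assert (HsumN : t <= sumR N g) by (rewrite <- Hg0; apply sumR_ge; auto).
  assert (HsumM : 0 <= sumR M td) by (apply sumR_nonneg; auto).
  unfold payoff_s in Hs.
  destruct (Rlt_dec 0 (total_bid M N td g)) as [HT|HT];
    [| exfalso; apply HT; unfold total_bid; lra].
  fold D in Hs. unfold price in Hs. fold D in Hs.
  set (T := total_bid M N td g) in *.
  assert (HTt : t <= T).
  { unfold T, total_bid. apply Rle_trans with (sumR N g); [exact HsumN|]. pose proof (Rplus_le_compat_r (sumR N g) _ _ HsumM). rewrite Rplus_0_l in H. exact H. }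
  rewrite Hg0 in Hs.
  set (p := T / D) in *.
  assert (Hp : 0 < p) by (unfold p; apply Rdiv_lt_0_compat; lra).
  assert (Hpk : t * (k0 / D) <= p * k0).
  { unfold p, Rdiv. assert (0 < / D) by (apply Rinv_0_lt_compat; lra). assert (0 <= (T - t) * (/ D * k0)) by (apply Rmult_le_pos; nra). nra. }
  assert (Htp : 0 <= t / p) by (apply Rdiv_le_0_compat; lra).
  assert (HCle : C 0%nat (k0 - t / p) <= C 0%nat k0).
  { destruct (Rle_dec (k0 - t/p) 0) as [Hle|Hle].
    - rewrite HC_zero by auto. lra.
    - destruct (Req_dec (t/p) 0) as [He|He].
      + rewrite He, Rminus_0_r. lra.
      + left. apply HC_incr; auto; lra. }
  pose proof (Rle_abs P0).
  assert (t * (k0 / D) = t * a + t) by (unfold a; ring).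
  lra.
Qed.
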